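(* Let $V$ be a vertex operator algebra and fix $n\in\mathbb{N}$. Let $u\in V$ be homogeneous and $v\in V$. (a) If $\mathrm{wt}\,u>-n$, then for every integer $m\ge n+1$, \[ u_{\mathrm{wt}\,u-m-1}v\ \sim_n\ (-1)^{m+\mathrm{wt}\,u}\sum_{j=1}^{n+\mathrm{wt}\,u}\binom{m-n-1}{j-1}\binom{m-n-j-1}{n+\mathrm{wt}\,u-j}\,u_{\mathrm{wt}\,u-n-j-1}v . \] Moreover, for $n+1\le m\le 2n+\mathrm{wt}\,u$ the right-hand side equals $u_{\mathrm{wt}\,u-m-1}v$ (so the relation is trivial in that range). (b) If $\mathrm{wt}\,u=-n$, then for every integer $m\ge n+1$, $u_{\mathrm{wt}\,u-m-1}v\sim_n 0$.
   Context: $V$ is a vertex operator algebra with vacuum $\mathbf{1}$, vertex operator $Y(v,x)=\sum_{k\in\mathbb{Z}}v_kx^{-k-1}$, and Virasoro operators $L(m)$; for homogeneous $v$, $\mathrm{wt}\,v$ denotes its $L(0)$-eigenvalue (an integer). For $n\in\mathbb{N}$, homogeneous $u\in V$ and $w\in V$, set $u\circ_n w=\mathrm{Res}_x\,(1+x)^{\mathrm{wt}\,u+n}Y(u,x)w\,x^{-2n-2}$ (a finite sum in $V$; $(1+x)^p$ is expanded in nonnegative powers of $x$), extended linearly in $u$. Let $O_n^\circ(V)=\mathrm{span}\{u\circ_n w: u,w\in V\}$. Write $a\sim_n b$ if $a-b\in O_n^\circ(V)$. Binomial coefficients: $\binom{p}{q}=p(p-1)\cdots(p-q+1)/q!$ for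 $p\in\mathbb{Z}$, $q\in\mathbb{N}$, and $\binom{p}{q}=0$ for $q<0$. *)

(* Defs.v *)
(* Vertex operator algebras over the complex numbers
   C := R[i] (R : realType, a model of the real numbers), in the
   component ("modes") formulation of Lepowsky--Li, Def. 3.1.22. *)
From HB Require Import structures.
From mathcomp Require Import all_boot all_order all_algebra.
From mathcomp Require Import complex reals.
Set Implicit Arguments. Unset Strict Implicit. Unset Printing Implicit Defensive.
Import Order.TTheory GRing.Theory Num.Theory.
Local Open Scope ring_scope.

Definition binZ (K : fieldType) (p : int) (q : nat) : K :=
  (\prod_(i < q) (p - (i : nat)%:Z))%:~R / (q`!)%:R.

Section VOADefs.
Variable K : fieldType.
Variable V : lmodType K.
(* Y k u w = u_k w, the coefficient of x^(-k-1) in Y(u,x) w. *)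
Variable Y : int -> V -> V -> V.
Variable vac om : V.
Variable c : K.

Definition Lop (m : int) (v : V) : V := Y (m + 1) om v.

Definition in_span (b : seq V) (v : V) : Prop :=
  exists cs : seq K, size cs = size b /\
    v = \sum_(i < size b) cs`_i *: b`_i.

Record is_VOA : Prop := {
  Y_linl : forall k a u u' w, Y k (a *: u + u') w = a *: Y k u w + Y k u' w;
  Y_linr : forall k a u w w', Y k u (a *: w + w') = a *: Y k u w + Y k u w';
  Y_trunc : forall u w, exists N : int, forall k, N <= k -> Y k u w = 0;
  Y_vac : forall k w, Y k vac w = (if k == -1 then w else 0);
  (* creation property: Y(u,x)1 = u + x V[[x]] *)
  Y_create_pos : forall k u, 0 <= k -> Y k u vac = 0;
  Y_create : forall u, Y (-1) u vac = u;
  (* Jacobi identity, in its component (Borcherds) form: for l m n in Z,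
     sum_{i>=0} C(m,i) (u_{l+i} v)_{m+n-i} w
       = sum_{i>=0} (-1)^i C(l,i) (u_{l+m-i} v_{n+i} w - (-1)^l v_{l+n-i} u_{m+i} w);
     both sides are finite sums by truncation, so we require equality of
     all sufficiently long partial sums. *)
  Y_jacobi : forall (l m n : int) (u v w : V), exists N : nat, forall M : nat,
    (N <= M)%N ->
    \sum_(i < M) binZ K m i *: Y (m + n - (i : nat)%:Z) (Y (l + (i : nat)%:Z) u v) w
    = \sum_(i < M) ((-1) ^+ i * binZ K l i) *:
        (Y (l + m - (i : nat)%:Z) u (Y (n + (i : nat)%:Z) v w)
         - (-1) ^ l *: Y (l + n - (i : nat)%:Z) v (Y (m + (i : nat)%:Z) u w));
  L_vir : forall (m k : int) (v : V),
    Lop m (Lop k v) - Lop k (Lop m v)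
    = (m - k)%:~R *: Lop (m + k) v
      + (if m + k == 0 then ((m ^+ 3 - m)%:~R / 12%:R * c) *: v else 0);
  (* L(-1)-derivative property: Y(L(-1)u,x) = d/dx Y(u,x) *)
  L_deriv : forall (k : int) (u w : V), Y k (Lop (-1) u) w = (- k)%:~R *: Y (k - 1) u w;
  om_wt : Lop 0 om = 2%:R *: om;
  (* grading V = (+)_{n in Z} V_(n), V_(n) = {v | L(0) v = n v} *)
  V_graded : forall v : V, exists s : seq (int * V),
    (forall i : nat, (i < size s)%N ->
       Lop 0 (nth (0, 0) s i).2 = ((nth (0, 0) s i).1)%:~R *: (nth (0, 0) s i).2) /\
    v = \sum_(t <- s) t.2;
  (* dim V_(n) < oo *)
  V_fin : forall n : int, exists b : seq V,
    forall v, Lop 0 v = n%:~R *: v -> in_span b v;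
  V_low : exists N : int, forall (n : int) (v : V), n < N ->
    Lop 0 v = n%:~R *: v -> v = 0
}.

(* circ_val n u w y : u is homogeneous (of weight k) and
   y = u o_n w = Res_x (1+x)^(k+n) Y(u,x) w x^(-2n-2)
     = sum_{i>=0} binom(k+n, i) u_{i-2n-2} w,
   the sum being truncated at an M beyond which all terms vanish. *)
Definition circ_val (n : nat) (u w y : V) : Prop :=
  exists k : int, Lop 0 u = k%:~R *: u /\
  exists M : nat,
    (forall i : nat, (M <= i)%N -> Y (i%:Z - 2 * n%:Z - 2) u w = 0) /\
    y = \sum_(i < M) binZ K (k + n%:Z) i *: Y ((i : nat)%:Z - 2 * n%:Z - 2) u w.

(* O_n^circ(V) = span { u o_n w } *)
Inductive in_O (n : nat) : V -> Prop :=
  | in_O0 : in_O n 0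
  | in_Oadd : forall (a : K) (u w y x : V),
      circ_val n u w y -> in_O n x -> in_O n (a *: y + x).

End VOADefs.

(* Main.v *)
Require Import Defs.
From HB Require Import structures.
From mathcomp Require Import all_boot all_order all_algebra.
From mathcomp Require Import complex reals.
From mathcomp Require Import ring lra zify.
Set Implicit Arguments. Unset Strict Implicit. Unset Printing Implicit Defensive.
Import Order.TTheory GRing.Theory Num.Theory.
Local Open Scope ring_scope.

Lemma sum_ext0 (M : zmodType) (F : nat -> M) n1 n2 : (n1 <= n2)%N ->
  (forall i, (n1 <= i)%N -> (i < n2)%N -> F i = 0) ->
  \sum_(i < n1) F i = \sum_(i < n2) F i.
Proof.
move=> le12 h; rewrite (big_ord_widen n2 F le12) big_mkcond; apply: eq_bigr => i _.
case: ifP => // /negbT; rewrite -leqNgt => hi; by rewrite h.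
Qed.

Section Bin.
Variable K : numFieldType.

Lemma binZ0 (p : int) : binZ K p 0 = 1.
Proof. by rewrite /binZ big_ord0 fact0 divr1. Qed.

Lemma fact_neq0 q : (q`!)%:R != 0 :> K.
Proof. by rewrite pnatr_eq0 -lt0n fact_gt0. Qed.

Lemma binZ_nat (a q : nat) : binZ K a%:Z q = ('C(a, q))%:R.
Proof.
rewrite /binZ; case: (leqP q a) => hq.
  have -> : (\prod_(i < q) (a%:Z - (i : nat)%:Z)) = (a ^_ q)%:Z.
    rewrite ffact_prod -[X in _ = X]natz natr_prod; apply: eq_bigr => i _.
    rewrite subzn ?natz //; apply: ltnW; exact: (leq_trans (ltn_ord i) hq).
  rewrite -pmulrn -bin_ffact natrM mulfK //; exact: fact_neq0.
rewrite bin_small //.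
rewrite (bigD1 (Ordinal hq)) //= subrr mul0r; by rewrite mul0r.
Qed.

Lemma binZ_pascal (p : int) q : binZ K p q.+1 + binZ K p q = binZ K (p + 1) q.+1.
Proof.
rewrite /binZ big_ord_recr big_ord_recl /=.
set F := \prod_(i < q) _.
have -> : \prod_(i < q) (p + 1 - (bump 0 i)%:Z) = F.
  apply: eq_bigr => i _; rewrite /bump /= add1n -addn1 PoszD; ring.
rewrite factS natrM !rmorphM /= subr0.
have h1 := fact_neq0 q.
have h2 : (q.+1)%:R != 0 :> K by rewrite pnatr_eq0.
field; by rewrite h1 /= addrC natr1 h2.
Qed.

Lemma altsum (a r : nat) :
  \sum_(l < r.+1) (-1) ^+ l * ('C(a, l))%:R = (-1) ^+ r * binZ K (a%:Z - 1) r :> K.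
Proof.
elim: r => [|r IH]; first by rewrite big_ord1 binZ0 bin0 expr0 mul1r.
rewrite big_ord_recr /= IH.
have := binZ_pascal (a%:Z - 1) r; rewrite subrK binZ_nat => <-.
rewrite exprS; ring.
Qed.

Lemma bin_tri (M k i : nat) : (i <= k)%N ->
  ('C(M, k) * 'C(k, i) = 'C(M, i) * 'C(M - i, k - i))%N.
Proof.
move=> hik; case: (leqP k M) => hkM; last first.
  rewrite bin_small // mul0n; case: (leqP i M) => hiM.
    by rewrite (@bin_small (M - i)) ?muln0 //; lia.
  by rewrite bin_small.
have hiM : (i <= M)%N by lia.
apply/eqP; rewrite -(eqn_pmul2r (fact_gt0 i)) -(eqn_pmul2r (fact_gt0 (k - i)))
  -(eqn_pmul2r (fact_gt0 (M - k))); apply/eqP.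
have e1 := bin_fact hkM. have e2 := bin_fact hik.
have e3 := bin_fact hiM. have e4 : (k - i <= M - i)%N by lia.
have e5 := bin_fact e4.
have e6 : (M - i - (k - i) = M - k)%N by lia.
have e7 : (k - (k - i) = i)%N by lia.
rewrite e6 in e5.
have e2' : ('C(k, i) * (i`! * (k - i)`!) = k`!)%N by [].
transitivity ('C(M, k) * (k`! * (M - k)`!))%N; first by rewrite -e2'; ring.
rewrite e1 -e3 -e5; ring.
Qed.

Lemma coef_id (M N i : nat) : (i < N)%N ->
  \sum_(k < N) (-1) ^+ (M - k) * ('C(M, k))%:R * ('C(k, i))%:R
  = (-1) ^+ (M + N + 1) * (('C(M, i))%:R * binZ K (M%:Z - i%:Z - 1) (N - i.+1)) :> K.
Proof.
move=> hiN; case: (leqP i M) => hiM; last first.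
  rewrite bin_small // mul0r mulr0; apply: big1 => k _.
  case: (leqP i k) => hk; first by rewrite (@bin_small M k) ?mulr0 ?mul0r //; lia.
  by rewrite (@bin_small k i) // mulr0.
set r := (N - i.+1)%N.
have eN : N = (i + r.+1)%N by rewrite /r; lia.
rewrite [in LHS]eN big_split_ord /= big1 ?add0r; last first.
  by move=> k _; rewrite (@bin_small k i) ?mulr0.
have -> : \sum_(l < r.+1) (-1) ^+ (M - (i + l)) * ('C(M, i + l))%:R * ('C(i + l, i))%:R
   = \sum_(l < r.+1) ((-1) ^+ (M + i) * ('C(M, i))%:R) * ((-1) ^+ l * ('C(M - i, l))%:R) :> K.
  apply: eq_bigr => l _.
  rewrite -mulrA -natrM bin_tri ?leq_addr // addKn natrM.
  case: (leqP l (M - i)) => hl; last first.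
    by rewrite (@bin_small (M - i) l) // !mulr0.
  have -> : (M + i = (M - (i + l)) + (i + l).*2 - l)%N by rewrite -addnn; lia.
  have -> : ((M - (i + l)) + (i + l).*2 - l = (M - (i + l)) + (i.*2 + l))%N by rewrite doubleD; lia.
  rewrite !exprD -!mul2n !(mulnC 2) !exprM !sqrr_sign.
  have hs : (-1) ^+ l * (-1) ^+ l = 1 :> K by rewrite -expr2 sqrr_sign.
  rewrite [RHS](_ : _ = (-1) ^+ (M - (i + l)) * ('C(M, i)%:R * 'C(M - i, l)%:R)
     * ((-1) ^+ l * (-1) ^+ l)); last by ring.
  by rewrite hs mulr1.
rewrite -mulr_sumr altsum -subzn // eN.
rewrite (_ : (M + (i + r.+1) + 1 = (M + i) + r + 2)%N); last by lia.
rewrite !exprD; ring.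
Qed.
End Bin.

Section VOA.
Variable R : realType.
Local Notation K := (R[i]).
Variable V : lmodType K.
Variable Y : int -> V -> V -> V.
Variables (vac om : V) (c : K).
Hypothesis hV : is_VOA Y vac om c.
Variable n : nat.
Variable v : V.

Lemma O_add x y : in_O Y om n x -> in_O Y om n y -> in_O Y om n (x + y).
Proof.
elim=> [|a u w y' x' hc hx IH] hy; first by rewrite add0r.
by rewrite -addrA; apply: in_Oadd hc (IH hy).
Qed.

Lemma O_scale a x : in_O Y om n x -> in_O Y om n (a *: x).
Proof.
elim=> [|b u w y' x' hc hx IH]; first by rewrite scaler0; apply: in_O0.
by rewrite scalerDr scalerA; apply: in_Oadd hc IH.
Qed.

Lemma O_circ u w y : circ_val Y om n u w y -> in_O Y om n y.
Proof.
move=> h; rewrite -[y]addr0 -[y]scale1r; apply: in_Oadd h (in_O0 _ _ _).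
Qed.

Lemma O_sub x y : in_O Y om n x -> in_O Y om n y -> in_O Y om n (x - y).
Proof. by move=> hx hy; apply: O_add hx _; rewrite -scaleN1r; apply: O_scale. Qed.

Lemma Y0l k x : Y k 0 x = 0.
Proof.
have := Y_linl hV k 1 0 0 x; rewrite !scale1r !addr0 => h.
by apply: (@addrI _ (Y k 0 x)); rewrite addr0 -h.
Qed.

Lemma YZl k a w x : Y k (a *: w) x = a *: Y k w x.
Proof. by have := Y_linl hV k a w 0 x; rewrite addr0 Y0l addr0. Qed.

Lemma Y0r k w : Y k w 0 = 0.
Proof.
have := Y_linr hV k 1 w 0 0; rewrite !scale1r !addr0 => h.
by apply: (@addrI _ (Y k w 0)); rewrite addr0 -h.
Qed.

Lemma YZr k a w x : Y k w (a *: x) = a *: Y k w x.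
Proof. by have := Y_linr hV k a w x 0; rewrite addr0 Y0r addr0. Qed.

Definition Psi (w : V) (b : int) (p : {poly K}) : V :=
  \sum_(i < size p) p`_i *: Y (b - (i : nat)%:Z) w v.

Lemma Psi_ext w b (p : {poly K}) B : (size p <= B)%N ->
  Psi w b p = \sum_(i < B) p`_i *: Y (b - (i : nat)%:Z) w v.
Proof.
move=> hB; rewrite /Psi. refine (@sum_ext0 _ (fun i : nat => p`_i *: Y (b - i%:Z) w v) _ _ hB _). move=> i hi _.
by rewrite nth_default // scale0r.
Qed.

Lemma PsiD w b p q : Psi w b (p + q) = Psi w b p + Psi w b q.
Proof.
have h := size_add p q.
rewrite !(@Psi_ext _ _ _ (maxn (size p) (size q))) ?leq_maxl ?leq_maxr //.
by rewrite -big_split; apply: eq_bigr => i _; rewrite coefD scalerDl.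
Qed.

Lemma PsiZ w b a p : Psi w b (a *: p) = a *: Psi w b p.
Proof.
rewrite !(@Psi_ext _ _ _ (size p)) ?size_scale_leq // scaler_sumr.
by apply: eq_bigr => i _; rewrite coefZ scalerA.
Qed.

Lemma PsiN w b p : Psi w b (- p) = - Psi w b p.
Proof. by rewrite -[- p]scaleN1r PsiZ scaleN1r. Qed.

Lemma PsiB w b p q : Psi w b (p - q) = Psi w b p - Psi w b q.
Proof. by rewrite PsiD PsiN. Qed.

Lemma Psi0 w b : Psi w b 0 = 0.
Proof. by rewrite /Psi size_poly0 big_ord0. Qed.

Lemma PsiX w b p : Psi w b ('X * p) = Psi w (b - 1) p.
Proof.
rewrite (@Psi_ext _ _ _ (size p).+1); last first.
  by rewrite mulrC; apply: (leq_trans (size_mul_leq _ _)); rewrite size_polyX addn2.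
rewrite big_ord_recl coefXM /= scale0r add0r /Psi; apply: eq_bigr => i _.
rewrite coefXM /= /bump /= add1n; congr (_ *: Y _ w v).
rewrite -addn1 PoszD; ring.
Qed.

Lemma PsiXn w b k : Psi w b ('X^k) = Y (b - k%:Z) w v.
Proof.
rewrite (@Psi_ext _ _ _ k.+1) ?size_polyXn // big_ord_recr /= coefXn eqxx scale1r.
rewrite big1 ?add0r // => i _; rewrite coefXn.
by rewrite (ltn_eqF (ltn_ord i)) scale0r.
Qed.

Lemma coefL (b : int) (p : {poly K}) j :
  ('X * p^`() - b%:~R *: p)`_j = (j%:R - b%:~R) * p`_j.
Proof.
rewrite coefB coefZ coefXM; case: j => [|j] /=; first by ring.
rewrite coef_deriv -mulr_natr; ring.
Qed.

Lemma PsiL w b p :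
  Psi (Lop Y om (-1) w) b p = Psi w (b - 1) ('X * p^`() - b%:~R *: p).
Proof.
rewrite (@Psi_ext _ _ _ (size p)) // (@Psi_ext w _ _ (size p)); last first.
  apply/leq_sizeP => j hj; by rewrite coefL nth_default // mulr0.
apply: eq_bigr => i _.
rewrite (L_deriv hV) scalerA coefL.
have -> : b - (i : nat)%:Z - 1 = b - 1 - (i : nat)%:Z by ring.
congr (_ *: _); rewrite mulrC; congr (_ * _).
by rewrite rmorphN rmorphB /= opprB.
Qed.

Lemma coef_XaddC_exp k i : ((('X + 1) ^+ k : {poly K})`_i) = ('C(k, i))%:R.
Proof.
elim: k i => [|k IH] i.
  by rewrite expr0 coef1 bin0n.
rewrite exprS mulrDl mul1r coefD coefXM; case: i => [|i] /=; rewrite !IH.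
  by rewrite add0r !bin0.
by rewrite binS natrD addrC.
Qed.

Lemma size_XaddC_exp k : (size (('X + 1) ^+ k : {poly K}) <= k.+1)%N.
Proof. by apply/leq_sizeP => j hj; rewrite coef_XaddC_exp bin_small. Qed.

Lemma L1_wt w (k : int) : Lop Y om 0 w = k%:~R *: w ->
  Lop Y om 0 (Lop Y om (-1) w) = (k + 1)%:~R *: Lop Y om (-1) w.
Proof.
move=> hw; have := L_vir hV 0 (-1) w.
rewrite /= add0r sub0r opprK scale1r addr0 hw.
have -> : Lop Y om (-1) (k%:~R *: w) = k%:~R *: Lop Y om (-1) w by rewrite /Lop YZr.
move/eqP; rewrite subr_eq => /eqP ->.
by rewrite rmorphD /= scalerDl scale1r addrC.
Qed.

Lemma A0 (N : nat) w : Lop Y om 0 w = (N%:Z - n%:Z)%:~R *: w ->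
  in_O Y om n (Psi w (N%:Z - 2 * n%:Z - 2) (('X + 1) ^+ N)).
Proof.
move=> hw; have [N0 hN0] := Y_trunc hV w v.
apply: (@O_circ w v); exists (N%:Z - n%:Z); split => //.
exists (N.+1 + absz (N0 + 2 * n%:Z + 2)%R)%N; split.
  move=> i hi; apply: hN0; lia.
rewrite subrK.
under eq_bigr do rewrite binZ_nat.
rewrite -(@sum_ext0 _ (fun i : nat => ('C(N, i))%:R *: Y (i%:Z - 2 * n%:Z - 2) w v) N.+1);
  last first.
- by move=> i hi _; rewrite bin_small // scale0r.
- by rewrite leq_addr.
rewrite (Psi_ext _ _ (size_XaddC_exp N)) (reindex_inj rev_ord_inj) /=.
apply: eq_bigr => i _; rewrite coef_XaddC_exp subSS bin_sub; last by rewrite -ltnS.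
congr (_ *: Y _ w v); rewrite -subzn; last by rewrite -ltnS.
ring.
Qed.


Lemma deriv_id (N : nat) (bK : K) :
  'X * ((('X + 1) ^+ N.+1 : {poly K})^`()) - bK *: ('X + 1) ^+ N.+1
  = ((N.+1)%:R - bK) *: ('X * ('X + 1) ^+ N) - bK *: ('X + 1) ^+ N.
Proof.
rewrite deriv_exp derivD derivX derivC addr0 mul1r /= -!mul_polyC exprS.
rewrite rmorphB /=; ring.
Qed.


Lemma Aind (e : nat) : forall (N : nat) w,
  Lop Y om 0 w = (N%:Z - n%:Z)%:~R *: w ->
  in_O Y om n (Psi w (N%:Z - 2 * n%:Z - 2 - e%:Z) (('X + 1) ^+ N)).
Proof.
elim: e => [|e IH] N w hw; first by rewrite subr0; apply: A0.
have hw' : Lop Y om 0 (Lop Y om (-1) w) = ((N.+1)%:Z - n%:Z)%:~R *: Lop Y om (-1) w.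
  rewrite (L1_wt hw); congr (_%:~R *: _); rewrite -addn1 PoszD; ring.
have H1 := IH N.+1 _ hw'.
have H2 := IH N w hw.
set b := (N.+1)%:Z - 2 * n%:Z - 2 - e%:Z in H1.
rewrite PsiL deriv_id PsiB !PsiZ PsiX in H1.
have eb : b - 1 = N%:Z - 2 * n%:Z - 2 - e%:Z by rewrite /b intS; ring.
rewrite eb in H1.
have eb2 : N%:Z - 2 * n%:Z - 2 - e%:Z - 1 = N%:Z - 2 * n%:Z - 2 - (e.+1)%:Z.
  by rewrite intS; ring.
rewrite eb2 in H1.
set P2 := Psi w _ _ in H1 *.
set P1 := Psi w _ _ in H1 H2.
have eA : (N.+1)%:R - b%:~R = ((2 * n + 2 + e)%N)%:R :> K.
  rewrite /b !rmorphB !rmorphM /= -!pmulrn; ring.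
have hA : ((2 * n + 2 + e)%N)%:R != 0 :> K by rewrite pnatr_eq0 addn2.
rewrite eA in H1.
have -> : P2 = ((2 * n + 2 + e)%N)%:R^-1 *: (((2 * n + 2 + e)%N)%:R *: P2 - b%:~R *: P1 + b%:~R *: P1).
  by rewrite subrK scalerA mulVf // scale1r.
by apply: O_scale; apply: O_add H1 (O_scale _ H2).
Qed.


Lemma Aideal (N : nat) w : Lop Y om 0 w = (N%:Z - n%:Z)%:~R *: w ->
  forall (q : {poly K}) (e : nat),
  in_O Y om n (Psi w (N%:Z - 2 * n%:Z - 2 - e%:Z) (q * ('X + 1) ^+ N)).
Proof.
move=> hw q; elim/poly_ind: q => [|q a IH] e.
  by rewrite mul0r Psi0; apply: in_O0.
have -> : (q * 'X + a%:P) * ('X + 1) ^+ N = 'X * (q * ('X + 1) ^+ N) + a *: ('X + 1) ^+ N.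
  by rewrite -mul_polyC; ring.
rewrite PsiD PsiX PsiZ; apply: O_add; last by apply: O_scale; apply: Aind.
have -> : N%:Z - 2 * n%:Z - 2 - e%:Z - 1 = N%:Z - 2 * n%:Z - 2 - (e.+1)%:Z.
  by rewrite intS; ring.
exact: IH.
Qed.

Definition Pp (M N : nat) : {poly K} :=
  \sum_(k < N) ((-1) ^+ (M - k) * ('C(M, k))%:R) *: ('X + 1) ^+ k.
Definition Qp (M N : nat) : {poly K} :=
  \sum_(k < M.+1) ((-1) ^+ (M - (N + k)) * ('C(M, N + k))%:R) *: ('X + 1) ^+ k.

Lemma decomp M N : 'X^M = Pp M N + Qp M N * ('X + 1) ^+ N.
Proof.
have -> : ('X^M : {poly K}) = (-1 + ('X + 1)) ^+ M by congr (_ ^+ _); ring.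
rewrite exprDn.
pose F := fun k : nat => ((-1) ^+ (M - k) * ('C(M, k))%:R) *: (('X + 1) ^+ k : {poly K}).
have -> : \sum_(k < M.+1) ((-1) ^+ (M - k) * ('X + 1) ^+ k) *+ 'C(M, k)
    = \sum_(k < M.+1) F k.
  by apply: eq_bigr => k _; rewrite /F -mul_polyC rmorphM rmorphXn rmorphN1 /= polyC_natr mulr_natr mulrnAl.
rewrite (@sum_ext0 _ F M.+1 (N + M.+1)); last first.
- by move=> k hk _; rewrite /F bin_small // mulr0 scale0r.
- by rewrite leq_addl.
rewrite big_split_ord /=; congr (_ + _).
rewrite mulr_suml; apply: eq_bigr => k _.
by rewrite /F -scalerAl -exprD addnC.
Qed.


Lemma coefPp M N i : (Pp M N)`_i
  = \sum_(k < N) (-1) ^+ (M - k) * ('C(M, k))%:R * ('C(k, i))%:R.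
Proof.
rewrite /Pp coef_sum; apply: eq_bigr => k _; by rewrite coefZ coef_XaddC_exp.
Qed.

Lemma size_Pp M N : (size (Pp M N) <= N)%N.
Proof.
apply/leq_sizeP => j hj; rewrite coefPp big1 // => k _.
by rewrite (@bin_small k j) ?mulr0 //; exact: leq_trans (ltn_ord k) hj.
Qed.

Lemma Qp0 M N : (M < N)%N -> Qp M N = 0.
Proof.
move=> h; rewrite /Qp big1 // => k _.
by rewrite bin_small ?mulr0 ?scale0r //; apply: leq_trans h (leq_addr _ _).
Qed.

Section Main.
Variables (u : V) (wt : int) (N M : nat) (m : int).
Hypothesis hu : Lop Y om 0 u = wt%:~R *: u.
Hypothesis eN : N%:Z = n%:Z + wt.
Hypothesis eM : M%:Z = m - n%:Z - 1.

Let hw : Lop Y om 0 u = (N%:Z - n%:Z)%:~R *: u.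
Proof. by rewrite hu eN; congr (_%:~R *: _); ring. Qed.

Let b0 := N%:Z - 2 * n%:Z - 2 - 0%:Z.

Lemma PsiXM : Psi u b0 'X^M = Y (wt - m - 1) u v.
Proof. rewrite PsiXn /b0; congr (Y _ u v); rewrite eM eN; ring. Qed.

Lemma PsiPp : Psi u b0 (Pp M N) =
  (-1) ^ (m + wt) *:
     \sum_(1 <= j < N.+1)
        (binZ R[i] (m - n%:Z - 1) (j.-1)
         * binZ R[i] (m - n%:Z - j%:Z - 1) (subn N j))
        *: Y (wt - n%:Z - j%:Z - 1) u v.
Proof.
rewrite (Psi_ext _ _ (size_Pp M N)) big_add1 /= big_mkord scaler_sumr.
apply: eq_bigr => i _; rewrite scalerA coefPp coef_id //.
have -> : m + wt = (M + N + 1)%N%:Z by rewrite !PoszD eM eN; ring.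
rewrite -exprnP; congr (_ *: Y _ u v); last first.
  by rewrite /b0 eN intS; ring.
rewrite -eM binZ_nat; congr (_ * (_ * binZ _ _ _)).
by rewrite eM intS; ring.
Qed.

Lemma part_a1 : in_O Y om n
  (Y (wt - m - 1) u v - (-1) ^ (m + wt) *:
     \sum_(1 <= j < N.+1)
        (binZ R[i] (m - n%:Z - 1) (j.-1)
         * binZ R[i] (m - n%:Z - j%:Z - 1) (subn N j))
        *: Y (wt - n%:Z - j%:Z - 1) u v).
Proof.
rewrite -PsiXM -PsiPp -PsiB.
have -> : 'X^M - Pp M N = Qp M N * ('X + 1) ^+ N.
  by rewrite (decomp M N) addrAC subrr add0r.
exact: (Aideal hw).
Qed.

Lemma part_a2 : (M < N)%N ->
  (-1) ^ (m + wt) *: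
     \sum_(1 <= j < N.+1)
        (binZ R[i] (m - n%:Z - 1) (j.-1)
         * binZ R[i] (m - n%:Z - j%:Z - 1) (subn N j))
        *: Y (wt - n%:Z - j%:Z - 1) u v
  = Y (wt - m - 1) u v.
Proof.
move=> h; rewrite -PsiPp -PsiXM; congr (Psi _ _ _).
by rewrite (decomp M N) Qp0 // mul0r addr0.
Qed.

End Main.

Lemma part_b (u : V) (M : nat) (m : int) :
  Lop Y om 0 u = (- n%:Z)%:~R *: u -> M%:Z = m - n%:Z - 1 ->
  in_O Y om n (Y (- n%:Z - m - 1) u v).
Proof.
move=> hu eM.
have hw : Lop Y om 0 u = (0%N%:Z - n%:Z)%:~R *: u by rewrite hu sub0r.
have := Aind M hw; rewrite expr0 -(expr0 'X) PsiXn.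
have -> : (0%N%:Z - 2 * n%:Z - 2 - M%:Z - 0%N%:Z) = - n%:Z - m - 1.
  by rewrite eM; ring.
done.
Qed.

End VOA.

Unset Implicit Arguments.
Set Strict Implicit.

Theorem proposition3p2 (R : realType) (V : lmodType R[i])
    (Y : int -> V -> V -> V) (vac om : V) (c : R[i])
    (hV : is_VOA Y vac om c)
    (n : nat) (u v : V) (wt : int)
    (hu : Lop Y om 0 u = wt%:~R *: u) :
  ( (- (n%:Z) < wt) ->
    (forall m : int, n%:Z + 1 <= m ->
       in_O Y om n
         (Y (wt - m - 1) u v
          - (-1) ^ (m + wt) *:
              \sum_(1 <= j < (absz (n%:Z + wt)%R).+1)
                 (binZ R[i] (m - n%:Z - 1) (j.-1)
                  * binZ R[i] (m - n%:Z - j%:Z - 1) (subn (absz (n%:Z + wt)%R) j))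
                 *: Y (wt - n%:Z - j%:Z - 1) u v))
    /\
    (forall m : int, n%:Z + 1 <= m -> m <= 2 * n%:Z + wt ->
       (-1) ^ (m + wt) *:
         \sum_(1 <= j < (absz (n%:Z + wt)%R).+1)
            (binZ R[i] (m - n%:Z - 1) (j.-1)
             * binZ R[i] (m - n%:Z - j%:Z - 1) (subn (absz (n%:Z + wt)%R) j))
            *: Y (wt - n%:Z - j%:Z - 1) u v
       = Y (wt - m - 1) u v) )
  /\
  ( wt = - (n%:Z) ->
    forall m : int, n%:Z + 1 <= m -> in_O Y om n (Y (wt - m - 1) u v) ).
Proof.
split.
  move=> hpos.
  have eN : (absz (n%:Z + wt)%R)%:Z = n%:Z + wt by lia.
  split.
    move=> m hm.
    have eM : (absz (m - n%:Z - 1)%R)%:Z = m - n%:Z - 1 by lia.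
    exact: (part_a1 hV v hu eN eM).
  move=> m hm1 hm2.
  have eM : (absz (m - n%:Z - 1)%R)%:Z = m - n%:Z - 1 by lia.
  apply: (part_a2 Y v u eN eM); lia.
move=> hw m hm.
have eM : (absz (m - n%:Z - 1)%R)%:Z = m - n%:Z - 1 by lia.
rewrite hw; apply: (part_b hV v _ eM); by rewrite -hw.
Qed.
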